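(* Let $G$ be an abelian group (written multiplicatively) and let $C$ be a finite Sidon subset of $G$. If $A,B$ are (nonempty) subsets of $G$ with $AB\subset C$, then $|AB|\geq |A|+|B|-1$.
   Context: $AB=\{ab: a\in A, b\in B\}$. A subset $C\subset G$ is a Sidon subset if the equation $ab=cd$ with $a,b,c,d\in C$ has only the trivial solutions $\{a,b\}=\{c,d\}$. *)

(* Defs.v *)
(* an abelian group is a zmodType (written additively). *)
From HB Require Import structures.
From mathcomp Require Import all_boot all_order all_algebra.
From mathcomp Require Import finmap.
Set Implicit Arguments. Unset Strict Implicit. Unset Printing Implicit Defensive.
Import GRing.Theory.
Local Open Scope ring_scope.
Local Open Scope fset_scope.

Definition sumset (G : zmodType) (A B : {fset G}) : {fset G} :=
  [fset (a + b)%R | a in A, b in B].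

Definition sidon (G : zmodType) (C : {fset G}) : Prop :=
  forall a b c d, a \in C -> b \in C -> c \in C -> d \in C ->
    (a + b = c + d)%R -> ((a = c /\ b = d) \/ (a = d /\ b = c)).

(* Main.v *)
Require Import Defs.
From HB Require Import structures.
From mathcomp Require Import all_boot all_order all_algebra.
From mathcomp Require Import finmap.
From mathcomp Require Import zify.
Local Open Scope fset_scope.

Import GRing.Theory.

Lemma sumset_in {G : zmodType} {A B : {fset G}} {a b : G} :
  a \in A -> b \in B -> (a + b)%R \in sumset A B.
Proof. by move=> aA bB; apply/imfset2P; exists a => //; exists b. Qed.

Lemma card_le_sumset_r {G : zmodType} {A : {fset G}} (B : {fset G}) {a : G} :
  a \in A -> (#|` B| <= #|` sumset A B|)%N.
Proof.
move=> aA.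
have -> : #|` B| = #|` [fset (a + b)%R | b in B]|.
  by rewrite card_imfset //; apply: GRing.addrI.
apply: fsubset_leq_card; apply/fsubsetP => x /imfsetP [b bB ->].
exact: sumset_in.
Qed.

Lemma card_le_sumset_l {G : zmodType} (A : {fset G}) {B : {fset G}} {b : G} :
  b \in B -> (#|` A| <= #|` sumset A B|)%N.
Proof.
move=> bB.
have -> : #|` A| = #|` [fset (a + b)%R | a in A]|.
  by rewrite card_imfset //; apply: GRing.addIr.
apply: fsubset_leq_card; apply/fsubsetP => x /imfsetP [a aA ->].
exact: sumset_in.
Qed.

Theorem corollary2p8 (G : zmodType) (C A B : {fset G}) :
  sidon C -> A != fset0 -> B != fset0 -> sumset A B `<=` C ->
  (#|` A| + #|` B| - 1 <= #|` sumset A B|)%N.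
Proof.
move=> sC /fset0Pn [a0 a0A] /fset0Pn [b0 b0B] /fsubsetP sub.
have key : forall a a' b b', a \in A -> a' \in A -> b \in B -> b' \in B ->
    a = a' \/ b = b'.
  move=> a a' b b' aA a'A bB b'B.
  have h : ((a + b) + (a' + b') = (a + b') + (a' + b))%R.
    by rewrite addrACA [RHS]addrACA (addrC b).
  have := sC _ _ _ _ (sub _ (sumset_in aA bB)) (sub _ (sumset_in a'A b'B))
    (sub _ (sumset_in aA b'B)) (sub _ (sumset_in a'A bB)) h.
  case=> [[/(addrI a) -> _]|[/(addIr b) -> _]]; first by right.
  by left.
have [sA|/fsubsetPn [a aA naa0]] := boolP (A `<=` [fset a0]).
  have : (#|` A| <= 1)%N by rewrite -(cardfs1 a0); exact: fsubset_leq_card.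
  have := card_le_sumset_r B a0A.
  move: (#|` A|) (#|` B|) (#|` sumset A B|) => x y z; lia.
have sB : B `<=` [fset b0].
  apply/fsubsetP => b bB; rewrite in_fset1; apply/eqP.
  case: (key a a0 b b0 aA a0A bB b0B) => // e.
  by rewrite e in_fset1 eqxx in naa0.
have : (#|` B| <= 1)%N by rewrite -(cardfs1 b0); exact: fsubset_leq_card.
have := card_le_sumset_l A b0B.
move: (#|` A|) (#|` B|) (#|` sumset A B|) => x y z; lia.
Qed.
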